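(* In the multi-server distributed computing model $\mathcal{T}(N,K,K_c,M,N_r)$ with cyclic placement of datasets, where $\Delta=K/N\in\mathbb{Z}^+$ and $M=\Delta(N-N_r+1)$, suppose the user demands the single ($K_c=1$) multi-linear function $f(W_{\mathcal{K}})=\prod_{k\in[K]}W_k$ over $\mathbb{F}_2$, and the subfunctions $W_k\sim\mathrm{Bern}(\epsilon)$ are i.i.d. across $k\in[K]$ for some $\epsilon\in(0,1)$. Then characteristic graph-based compression achieves $$R_{\rm ach}\le\frac{1-(\epsilon_M)^{N^*}}{1-\epsilon_M}\,h(\epsilon_M)+(\epsilon_M)^{N^*}\,1_{\Delta_N>0}\,h(\epsilon_{\xi_N}),$$ where $\epsilon_l=\epsilon^l$ is the probability that the product of $l$ distinct subfunctions equals $1$, $N^*=\lfloor N/(N-N_r+1)\rfloor$ is the number of servers that each compute the product of a disjoint set of $M$ subfunctions, $\Delta_N=N-N^*(N-N_r+1)$, and, when $\Delta_N\ge1$, $\xi_N$ is the number of remaining subfunctions (not covered by those $N^*$ servers) whose product is computed by an additional server; $h(\cdot)$ is the binary entropy function and $1_{\Delta_N>0}$ is the indicator that $\Delta_N>0$.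
   Context: Setting: $K$ datasets and $N$ non-cooperating servers $\Omega=[N]$; server $i$ stores datasets with indices $\mathcal{Z}_i$ and holds $X_i=\{W_k\}_{k\in\mathcal{Z}_i}$, $W_k=h_k(D_k)\in\{0,1\}$. Cyclic placement with recovery threshold $N_r$: $\mathcal{Z}_i=\bigcup_{r=0}^{\Delta-1}\{\mathrm{mod}(i,N)+rN,\dots,\mathrm{mod}(i+N-N_r,N)+rN\}$ (convention $\mathrm{mod}(b,a)=a$ if $a\mid b$), so $|\mathcal{Z}_i|=M$ and any $N_r$ servers store all datasets. The user must compute $f$ asymptotically losslessly over long i.i.d. sequences. Each server builds a characteristic graph of $X_i$ (vertices the values of $X_i$, adjacent iff the function value differs for some jointly positive-probability value of the remaining data) and transmits an encoding of a coloring of its OR powers, possibly using previously transmitted servers' information as side information (conditional graph entropy); $R_{\rm ach}$ is the resulting sum of servers' rates. *)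

(* Defs.v *)
From HB Require Import structures.
From mathcomp Require Import all_boot all_order all_algebra.
From mathcomp Require Import reals exp.
Set Implicit Arguments. Unset Strict Implicit. Unset Printing Implicit Defensive.
Import Order.TTheory GRing.Theory Num.Theory.
Local Open Scope ring_scope.

(* One realization of the K subfunctions W_1..W_K (0-based indices k : 'I_K),
   each W_k in F_2 = bool. *)
Definition data (K : nat) := {ffun 'I_K -> bool}.

Definition srcP (R : realType) (K : nat) (eps : R) (w : data K) : R :=
  \prod_(k < K) (if w k then eps else 1 - eps).

Definition fprod (K : nat) (w : data K) : bool := \big[andb/true]_(k < K) w k.

Definition cyclicZ (K N Delta Nr : nat) (i : 'I_N) : {set 'I_K} :=
  [set k : 'I_K | [exists r : 'I_Delta, exists t : 'I_(N - Nr).+1,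
                    val k == ((i + t) %% N + r * N)%N]].

(* Value of X_i = {W_k}_{k in Z_i}, represented as the vector masked to Z. *)
Definition obs (K : nat) (Z : {set 'I_K}) (w : data K) : data K :=
  [ffun k => (k \in Z) && w k].

Definition prob (R : realType) (K : nat) (eps : R) (E : pred (data K)) : R :=
  \sum_(w : data K | E w) srcP eps w.

Definition log2 (R : realType) (x : R) : R := ln x / ln 2.

Definition condH (R : realType) (K : nat) (eps : R)
  (V : data K -> nat) (S : data K -> seq nat) : R :=
  - \sum_(w : data K) srcP eps w *
      log2 (prob eps [pred w' | (V w' == V w) && (S w' == S w)] /
            prob eps [pred w' | S w' == S w]).

Definition hbin (R : realType) (p : R) : R :=
  - (p * log2 p) - (1 - p) * log2 (1 - p).

(* A step of a sequential scheme: a server together with its coloring map,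
   which colors the server's value, given the previously transmitted colors
   (side information available to the server and the user). *)
Definition step (K N : nat) := ('I_N * (data K -> seq nat -> nat))%type.

Definition hist (K N : nat) (Z : 'I_N -> {set 'I_K}) (sch : seq (step K N))
  (w : data K) : seq nat :=
  foldl (fun h p => rcons h (p.2 (obs (Z p.1) w) h)) [::] sch.

Definition char_adj (R : realType) (K : nat) (eps : R) (Z : {set 'I_K})
  (S : data K -> seq nat) (h : seq nat) (x x' : data K) : Prop :=
  exists w w' : data K,
    [/\ 0 < srcP eps w, 0 < srcP eps w', obs Z w = x, obs Z w' = x'
      & [/\ S w = h, S w' = h, (forall k, k \notin Z -> w k = w' k)
          & fprod w != fprod w']].

Definition proper_coloring (R : realType) (K : nat) (eps : R) (Z : {set 'I_K})
  (S : data K -> seq nat) (c : data K -> seq nat -> nat) : Prop :=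
  forall h x x', char_adj eps Z S h x x' -> c x h != c x' h.

Definition valid_scheme (R : realType) (K N : nat) (eps : R)
  (Z : 'I_N -> {set 'I_K}) (sch : seq (step K N)) : Prop :=
  [/\ perm_eq (map fst sch) (enum 'I_N),
      (forall s1 p s2, sch = s1 ++ p :: s2 ->
         proper_coloring eps (Z p.1) (hist Z s1) p.2)
    & exists dec : seq nat -> bool,
        forall w, 0 < srcP eps w -> dec (hist Z sch w) = fprod w].

Fixpoint rate_rec (R : realType) (K N : nat) (eps : R) (Z : 'I_N -> {set 'I_K})
  (pre : seq (step K N)) (s : seq (step K N)) : R :=
  match s with
  | [::] => 0
  | p :: s' =>
      condH eps (fun w => p.2 (obs (Z p.1) w) (hist Z pre w)) (hist Z pre)
      + rate_rec eps Z (rcons pre p) s'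
  end.

Definition Rach (R : realType) (K N : nat) (eps : R) (Z : 'I_N -> {set 'I_K})
  (sch : seq (step K N)) : R := rate_rec eps Z [::] sch.

Definition prop3_bound (R : realType) (K N Nr Delta : nat) (eps : R) : R :=
  let M := (Delta * (N - Nr + 1))%N in
  let epsM := eps ^+ M in
  let Nstar := (N %/ (N - Nr + 1))%N in
  let DeltaN := (N - Nstar * (N - Nr + 1))%N in
  let xiN := (K - Nstar * M)%N in
  (1 - epsM ^+ Nstar) / (1 - epsM) * hbin epsM
  + epsM ^+ Nstar * (if (0 < DeltaN)%N then hbin (eps ^+ xiN) else 0).

(* Main.v *)
Require Import Defs.
From HB Require Import structures.
From mathcomp Require Import all_boot all_order all_algebra.
From mathcomp Require Import reals exp.
From mathcomp Require Import zify ring.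
Import Order.TTheory GRing.Theory Num.Theory.
Local Open Scope ring_scope.
Set Implicit Arguments. Unset Strict Implicit. Unset Printing Implicit Defensive.

Definition bA (K : nat) (U : {set 'I_K}) (w : data K) : bool := [forall k in U, w k].
Definition ccol (K : nat) (Z : {set 'I_K}) (x : data K) (h : seq nat) : nat :=
  if (0%N \in h) then 0%N else nat_of_bool [forall k in Z, x k].
Definition mk (K N : nat) (Zf : 'I_N -> {set 'I_K}) (s : seq 'I_N) : seq (step K N) :=
  map (fun i => (i, ccol (Zf i))) s.
Definition UU (K N : nat) (Zf : 'I_N -> {set 'I_K}) (s : seq 'I_N) : {set 'I_K} :=
  \bigcup_(i <- s) Zf i.

Lemma hist_rcons (K N : nat) (Zf : 'I_N -> {set 'I_K}) sch p w :
  hist Zf (rcons sch p) w = rcons (hist Zf sch w) (p.2 (obs (Zf p.1) w) (hist Zf sch w)).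
Proof. by rewrite /hist foldl_rcons. Qed.

Lemma ccol_obs (K : nat) (Z : {set 'I_K}) w h :
  ccol Z (obs Z w) h = if (0%N \in h) then 0%N else nat_of_bool (bA Z w).
Proof.
rewrite /ccol /bA; congr (if _ then _ else nat_of_bool _).
by apply: eq_forallb => k; rewrite ffunE; case: (k \in Z).
Qed.

Lemma bA_U (K : nat) (A B : {set 'I_K}) w : bA (A :|: B) w = bA A w && bA B w.
Proof.
rewrite /bA; apply/forallP/andP => [H|[/forallP H1 /forallP H2]].
  by split; apply/forallP => k; apply/implyP => kA; move/implyP: (H k); apply; rewrite inE kA ?orbT.
by move=> k; apply/implyP; rewrite inE => /orP[kA|kB]; [move/implyP: (H1 k)|move/implyP: (H2 k)]; apply.
Qed.

Lemma UU_rcons (K N : nat) (Zf : 'I_N -> {set 'I_K}) s i : UU Zf (rcons s i) = UU Zf s :|: Zf i.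
Proof. by rewrite /UU big_rcons. Qed.

Lemma UU_cat (K N : nat) (Zf : 'I_N -> {set 'I_K}) s1 s2 : UU Zf (s1 ++ s2) = UU Zf s1 :|: UU Zf s2.
Proof. by rewrite /UU big_cat. Qed.

Lemma mk_rcons (K N : nat) (Zf : 'I_N -> {set 'I_K}) s i :
  mk Zf (rcons s i) = rcons (mk Zf s) (i, ccol (Zf i)).
Proof. by rewrite /mk map_rcons. Qed.

Lemma hist0 (K N : nat) (Zf : 'I_N -> {set 'I_K}) s w :
  (0%N \in hist Zf (mk Zf s) w) = ~~ bA (UU Zf s) w.
Proof.
elim/last_ind: s => [|s i IH].
  by rewrite /hist /= /UU big_nil; apply/esym/negbF/forallP => k; rewrite inE.
rewrite mk_rcons hist_rcons /= ccol_obs UU_rcons bA_U mem_rcons in_cons IH.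
by case: (bA (UU Zf s) w); case: (bA (Zf i) w).
Qed.

Lemma hist1 (K N : nat) (Zf : 'I_N -> {set 'I_K}) s w :
  bA (UU Zf s) w -> hist Zf (mk Zf s) w = nseq (size s) 1%N.
Proof.
elim/last_ind: s => [|s i IH]; first by rewrite /hist.
rewrite UU_rcons bA_U => /andP[H1 H2].
rewrite mk_rcons hist_rcons /= ccol_obs hist0 H1 /= H2 IH // size_rcons.
by rewrite -cats1 -[in RHS]addn1 nseqD.
Qed.

Lemma prob_ext (R : realType) (K : nat) (eps : R) (E1 E2 : pred (data K)) :
  (forall w, E1 w = E2 w) -> prob eps E1 = prob eps E2.
Proof. by move=> H; rewrite /prob; apply: eq_bigl => w; rewrite H. Qed.

Lemma prob_bA (R : realType) (K : nat) (eps : R) (U : {set 'I_K}) :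
  prob eps (bA U) = eps ^+ #|U|.
Proof.
pose F := fun (k : 'I_K) (b : bool) =>
  if k \in U then (if b then eps else 0) else (if b then eps else 1 - eps).
transitivity (\sum_(w : {ffun 'I_K -> bool}) \prod_k F k (w k)).
  rewrite /prob /srcP big_mkcond /=; apply: eq_bigr => w _.
  case: ifP => [/forallP H|/negbT].
    apply: eq_bigr => k _; rewrite /F; case kU: (k \in U) => //.
    by move/implyP: (H k) => /(_ kU) ->.
  rewrite negb_forall => /existsP[k]; rewrite negb_imply => /andP[kU wk].
  by rewrite (bigD1 k) //= /F kU (negbTE wk) mul0r.
rewrite -bigA_distr_bigA /=.
transitivity (\prod_(k : 'I_K) (if k \in U then eps else 1)).
  apply: eq_bigr => k _; rewrite big_bool /F; case: (k \in U) => /=.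
    exact: (addr0 eps).
  exact: (subrKC eps 1).
by rewrite -big_mkcond /= prodr_const.
Qed.

Lemma srcP_gt0 (R : realType) (K : nat) (eps : R) (w : data K) :
  0 < eps -> eps < 1 -> 0 < srcP eps w.
Proof.
move=> e0 e1; rewrite /srcP; apply: prodr_gt0 => k _.
by case: (w k) => //; rewrite subr_gt0.
Qed.

Lemma prob_split (R : realType) (K : nat) (eps : R) (E F : pred (data K)) :
  prob eps E = prob eps [pred w | E w && F w] + prob eps [pred w | E w && ~~ F w].
Proof. by rewrite /prob (bigID F). Qed.

Lemma log2_xx (R : realType) (x : R) : log2 (x / x) = 0.
Proof.
rewrite /log2; have [->|x0] := eqVneq x 0; first by rewrite mul0r ln0 ?mul0r.
by rewrite divff // ln1 mul0r.
Qed.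

Lemma sum_cond2 (R : realType) (K : nat) (eps : R) (A B : pred (data K)) (c1 c2 : R) :
  \sum_(w : data K) srcP eps w * (if A w then (if B w then c1 else c2) else 0)
  = prob eps [pred w | A w && B w] * c1 + prob eps [pred w | A w && ~~ B w] * c2.
Proof.
rewrite /prob !mulr_suml.
rewrite [X in _ = X + _]big_mkcond [X in _ = _ + X]big_mkcond -big_split /=.
apply: eq_bigr => w _; case: (A w); case: (B w) => /=;
  by rewrite ?mulr0 ?addr0 ?add0r.
Qed.

Lemma histS (K N : nat) (Zf : 'I_N -> {set 'I_K}) s w w' :
  bA (UU Zf s) w -> (hist Zf (mk Zf s) w' == hist Zf (mk Zf s) w) = bA (UU Zf s) w'.
Proof.
move=> Aw; rewrite (hist1 Aw); apply/eqP/idP => [H|H]; last exact: hist1.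
by apply/negPn; rewrite -hist0 H mem_nseq andbF.
Qed.

Lemma condH_step (R : realType) (K N : nat) (eps : R) (Zf : 'I_N -> {set 'I_K}) s i :
  let p := prob eps (bA (UU Zf s)) in
  let q := prob eps (bA (UU Zf (rcons s i))) in
  condH eps (fun w => ccol (Zf i) (obs (Zf i) w) (hist Zf (mk Zf s) w)) (hist Zf (mk Zf s))
  = - (q * log2 (q / p) + (p - q) * log2 ((p - q) / p)).
Proof.
move=> p q.
have Hq : prob eps [pred w | bA (UU Zf s) w && bA (Zf i) w] = q.
  by rewrite /q; apply: prob_ext => w /=; rewrite UU_rcons bA_U.
have Hpq : prob eps [pred w | bA (UU Zf s) w && ~~ bA (Zf i) w] = p - q.
  by rewrite /p (prob_split eps (bA (UU Zf s)) (bA (Zf i))) Hq [q + _]addrC addrK.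
rewrite /condH; apply: (congr1 (fun x => - x)).
transitivity (\sum_(w : data K) srcP eps w * (if bA (UU Zf s) w then
   (if bA (Zf i) w then log2 (q / p) else log2 ((p - q) / p)) else 0)); last first.
  by rewrite sum_cond2 Hq Hpq.
apply: eq_bigr => w _; case Aw: (bA (UU Zf s) w); last first.
  transitivity (srcP eps w * 0); last by []. congr (_ * _).
  rewrite -[RHS](log2_xx (prob eps [pred w' | hist Zf (mk Zf s) w' == hist Zf (mk Zf s) w])).
  congr (log2 (_ / _)); apply: prob_ext => w' /=.
  rewrite !ccol_obs; case: (hist Zf (mk Zf s) w' =P hist Zf (mk Zf s) w) => [->|]; last by rewrite andbF.
  by rewrite hist0 Aw.
have ES : prob eps [pred w' | hist Zf (mk Zf s) w' == hist Zf (mk Zf s) w] = p.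
  by rewrite /p; apply: prob_ext => w' /=; rewrite histS.
rewrite ES; congr (_ * _).
have EV : prob eps [pred w' | (ccol (Zf i) (obs (Zf i) w') (hist Zf (mk Zf s) w') ==
        ccol (Zf i) (obs (Zf i) w) (hist Zf (mk Zf s) w)) &&
        (hist Zf (mk Zf s) w' == hist Zf (mk Zf s) w)]
   = prob eps [pred w' | bA (UU Zf s) w' && (bA (Zf i) w' == bA (Zf i) w)].
  apply: prob_ext => w' /=; rewrite histS // !ccol_obs !hist0 Aw /=.
  case Aw': (bA (UU Zf s) w'); rewrite /= ?andbT ?andbF //.
  by case: (bA (Zf i) w'); case: (bA (Zf i) w).
rewrite EV; case Bw: (bA (Zf i) w).
  by rewrite -Hq; congr (log2 (_ / _)); apply: prob_ext => w' /=; rewrite eqb_id.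
by rewrite -Hpq; congr (log2 (_ / _)); apply: prob_ext => w' /=; rewrite eqbF_neg.
Qed.

Fixpoint rr (R : realType) (K N : nat) (eps : R) (Zf : 'I_N -> {set 'I_K})
  (pre s : seq 'I_N) : R :=
  match s with
  | [::] => 0
  | i :: s' => eps ^+ #|UU Zf pre| * hbin (eps ^+ (#|UU Zf (rcons pre i)| - #|UU Zf pre|))
               + rr eps Zf (rcons pre i) s'
  end.

Lemma ent_eq (R : realType) (p q : R) : p != 0 ->
  - (q * log2 (q / p) + (p - q) * log2 ((p - q) / p)) = p * hbin (q / p).
Proof.
move=> p0; rewrite /hbin.
have -> : (p - q) / p = 1 - q / p by rewrite mulrBl divff.
have -> : p - q = p * (1 - q / p) by rewrite mulrBr mulr1 mulrCA divff // mulr1.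
have E : q = p * (q / p) by rewrite mulrCA divff // mulr1.
rewrite [X in X * log2 (q / p)]E.
move: (q / p) => a; move: (log2 a) (log2 (1 - a)) => b c; ring.
Qed.

Lemma rate_rr (R : realType) (K N : nat) (eps : R) (Zf : 'I_N -> {set 'I_K}) pre s :
  0 < eps -> rate_rec eps Zf (mk Zf pre) (mk Zf s) = rr eps Zf pre s.
Proof.
move=> e0; elim: s pre => [|i s IH] pre //=.
rewrite -mk_rcons IH; congr (_ + _).
rewrite condH_step ent_eq !prob_bA; last by rewrite expf_neq0 // gt_eqF.
congr (_ * hbin _).
rewrite UU_rcons expfB_cond // gt_eqF //= add0n; apply: subset_leq_card; exact: subsetUl.
Qed.

Lemma rr_cat (R : realType) (K N : nat) (eps : R) (Zf : 'I_N -> {set 'I_K}) pre s1 s2 :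
  rr eps Zf pre (s1 ++ s2) = rr eps Zf pre s1 + rr eps Zf (pre ++ s1) s2.
Proof.
elim: s1 pre => [|i s1 IH] pre /=; first by rewrite add0r cats0.
by rewrite IH addrA cat_rcons.
Qed.

Lemma hbin1 (R : realType) : hbin (1 : R) = 0.
Proof. rewrite /hbin /log2 ln1 subrr !mul0r mulr0; ring. Qed.

Lemma rr_full (R : realType) (K N : nat) (eps : R) (Zf : 'I_N -> {set 'I_K}) pre s :
  UU Zf pre = setT -> rr eps Zf pre s = 0.
Proof.
elim: s pre => [|i s IH] pre H //=.
have H' : UU Zf (rcons pre i) = setT by rewrite UU_rcons H setTU.
by rewrite IH // H' H subnn expr0 hbin1 mulr0 addr0.
Qed.

Lemma fprod_bA (K : nat) (w : data K) : Defs.fprod w = bA setT w.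
Proof.
rewrite /Defs.fprod /bA; apply/idP/forallP => [H k|H].
  by apply/implyP => _; move: H; rewrite (bigD1 k) //= => /andP[].
elim/big_rec: _ => // i b _ ->; rewrite andbT.
by move/implyP: (H i); apply; rewrite inE.
Qed.

Lemma bA_sub (K : nat) (A B : {set 'I_K}) w : A \subset B -> bA B w -> bA A w.
Proof.
move=> /subsetP AB /forallP H; apply/forallP => k; apply/implyP => kA.
by move/implyP: (H k); apply; apply: AB.
Qed.

Lemma bA_fprod (K : nat) (A : {set 'I_K}) w : ~~ bA A w -> Defs.fprod w = false.
Proof.
move=> H; rewrite fprod_bA; apply/negbTE; apply: contra H; apply: bA_sub; exact: subsetT.
Qed.

Lemma proper_mk (R : realType) (K N : nat) (eps : R) (Zf : 'I_N -> {set 'I_K}) s i :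
  proper_coloring eps (Zf i) (hist Zf (mk Zf s)) (ccol (Zf i)).
Proof.
move=> h x x' [w [w' [_ _ <- <- [Hw Hw' Hout Hf]]]].
subst h; rewrite !ccol_obs.
case E: (0%N \in hist Zf (mk Zf s) w).
  move: (E); rewrite hist0 => /bA_fprod Fw.
  move: E; rewrite -Hw' hist0 => /bA_fprod Fw'.
  by rewrite Fw Fw' in Hf.
case Bw: (bA (Zf i) w); case Bw': (bA (Zf i) w') => //.
  suff ew : w = w' by rewrite ew eqxx in Hf.
  apply/ffunP => k; case kZ: (k \in Zf i); last exact: Hout (negbT kZ).
  move/forallP: Bw => /(_ k); move/forallP: Bw' => /(_ k).
  by rewrite kZ /= => -> ->.
have Fw : Defs.fprod w = false by apply: (@bA_fprod _ (Zf i)); rewrite Bw.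
have Fw' : Defs.fprod w' = false by apply: (@bA_fprod _ (Zf i)); rewrite Bw'.
by rewrite Fw Fw' in Hf.
Qed.

Lemma mk_split (K N : nat) (Zf : 'I_N -> {set 'I_K}) ord s1 p s2 :
  mk Zf ord = s1 ++ p :: s2 -> exists s1' i, s1 = mk Zf s1' /\ p = (i, ccol (Zf i)).
Proof.
elim: ord s1 => [|i ord IH] [|x s1] //=.
  by case=> <- _; exists [::], i.
case=> <- /IH [s1' [j [-> ->]]]; by exists (i :: s1'), j.
Qed.

Lemma valid_mk (R : realType) (K N : nat) (eps : R) (Zf : 'I_N -> {set 'I_K}) ord :
  perm_eq ord (enum 'I_N) -> UU Zf ord = setT ->
  valid_scheme eps Zf (mk Zf ord).
Proof.
move=> Hp HU; split.
- by rewrite /mk -map_comp map_id_in.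
- move=> s1 p s2 /mk_split [s1' [i [-> ->]]]; exact: proper_mk.
- exists (fun h => 0%N \notin h) => w _.
  by rewrite hist0 negbK HU fprod_bA.
Qed.

Lemma memZ_in (N Delta Nr : nat) (i : 'I_N) (k : 'I_(Delta * N)) :
  (i <= k %% N < i + (N - Nr + 1))%N -> k \in cyclicZ (Delta * N) Delta Nr i.
Proof.
move=> /andP[h1 h2]; rewrite inE.
have N0 : (0 < N)%N by case: (i) => /= j; case: N {i k h1 h2} => //.
have r_lt : (k %/ N < Delta)%N by rewrite ltn_divLR // mulnC.
have t_lt : (k %% N - i < (N - Nr).+1)%N by lia.
apply/existsP; exists (Ordinal r_lt); apply/existsP; exists (Ordinal t_lt) => /=.
have -> : (i + (k %% N - i) = k %% N)%N by lia.
by rewrite modn_mod addnC -divn_eq.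
Qed.

Lemma memZ_out (N Delta Nr : nat) (i : 'I_N) (k : 'I_(Delta * N)) :
  (i + (N - Nr + 1) <= N)%N -> k \in cyclicZ (Delta * N) Delta Nr i ->
  (i <= k %% N < i + (N - Nr + 1))%N.
Proof.
move=> hi; rewrite inE => /existsP[r /existsP[t /eqP ->]].
have tl := ltn_ord t.
have N0 : (0 < N)%N by case: (i) => /= j; case: N {i k hi r t tl} => //.
rewrite (addnC ((i + t) %% N)%N) modnMDl modn_mod modn_small; lia.
Qed.

Lemma sum_lt (N m : nat) : (\sum_(0 <= k < N) (k < m)%N)%N = minn m N.
Proof.
elim: N => [|N IH]; first by rewrite big_geq // minn0.
rewrite big_nat_recr //= IH; case: (ltnP N m) => h /=; lia.
Qed.

Lemma card_mod (D N m : nat) : (m <= N)%N ->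
  #|[set k : 'I_(D * N) | (k %% N < m)%N]| = (D * m)%N.
Proof.
move=> mN.
rewrite -sum1_card big_mkcond /=.
transitivity (\sum_(0 <= k < D * N) (k %% N < m)%N)%N.
  rewrite big_mkord; apply: eq_bigr => k _; rewrite inE; by case: ifP.
elim: D => [|D IH]; first by rewrite mul0n big_geq.
rewrite mulSnr (@big_cat_nat _ _ _ (D * N)) /=; [|lia|lia].
rewrite IH mulSnr; congr (_ + _)%N.
rewrite -{1}(add0n (D * N)%N) big_addn addKn.
transitivity (\sum_(0 <= k < N) (k < m)%N)%N; last by rewrite sum_lt; lia.
rewrite !big_nat; apply: eq_bigr => k /andP[_ kN].
by rewrite addnC modnMDl modn_small.
Qed.

Lemma geo (R : realType) (a : R) (n : nat) : a != 1 ->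
  \sum_(i < n) a ^+ i = (1 - a ^+ n) / (1 - a).
Proof.
move=> a1; have a1' : 1 - a != 0 by rewrite subr_eq0 eq_sym.
elim: n => [|n IH]; first by rewrite big_ord0 expr0 subrr mul0r.
rewrite big_ord_recr /= IH exprS.
apply: (mulIf a1'); rewrite mulrDl !mulfVK //; ring.
Qed.

Unset Implicit Arguments.
Theorem proposition3 (R : realType) (N K Nr Delta : nat) (eps : R) :
  (0 < Nr)%N -> (Nr <= N)%N -> (0 < Delta)%N -> K = (Delta * N)%N ->
  0 < eps -> eps < 1 ->
  exists sch : seq (step K N),
    valid_scheme eps (cyclicZ K Delta Nr) sch /\
    Rach eps (cyclicZ K Delta Nr) sch <= prop3_bound K N Nr Delta eps.
Proof.
move=> Nr0 NrN D0 -> e0 e1.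
case: N Nr0 NrN => [|n] Nr0 NrN; first by lia.
set N := n.+1.
set Zf := cyclicZ (Delta * N) Delta Nr.
set L := (N - Nr + 1)%N.
set Ns := (N %/ L)%N.
have L0 : (0 < L)%N by rewrite /L; lia.
have LN : (L <= N)%N by rewrite /L; lia.
have NsL : (Ns * L <= N)%N by exact: leq_trunc_div.
have NsL2 : (N < Ns * L + L)%N.
  by rewrite {1}(divn_eq N L) ltn_add2l ltn_pmod.
set c := (Ns + (0 < N - Ns * L)%N)%N.
pose g (j : nat) : 'I_N := inord (j * L).
have gval : forall j, (j < c)%N -> val (g j) = (j * L)%N.
  move=> j jc; rewrite /g /= inordK //.
  have [jNs|jNs] := ltnP j Ns.
    have : (j.+1 * L <= Ns * L)%N by rewrite leq_mul2r jNs orbT.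
    rewrite mulSn; lia.
  have ej : j = Ns by move: jc; rewrite /c; case: (0 < N - Ns * L)%N => /=; lia.
  by move: jc; rewrite /c ej; case E: (0 < N - Ns * L)%N => /=; lia.
have Hblk : forall j, (j <= Ns)%N ->
    UU Zf (map g (iota 0 j)) = [set k : 'I_(Delta * N) | (k %% N < j * L)%N].
  elim=> [|j IH] jNs.
    by apply/setP => k; rewrite /UU big_nil !inE.
  rewrite -addn1 iotaD map_cat UU_cat IH; last by lia.
  have jc : (j < c)%N by rewrite /c; lia.
  have gj := gval j jc.
  have hj : (g j + (N - Nr + 1) <= N)%N.
    have : (j.+1 * L <= Ns * L)%N by rewrite leq_mul2r jNs orbT.
    by rewrite gj mulSn -/L; lia.
  apply/setP => k; rewrite !inE /UU /= big_seq1 add0n.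
  case E: (k \in Zf (g j)).
    have := memZ_out hj E; rewrite gj -/L => /andP[h1 h2].
    rewrite orbT; apply/esym; rewrite mulnDl mul1n; lia.
  have nh : ~~ (g j <= k %% N < g j + (N - Nr + 1))%N.
    by apply/negP => /memZ_in H; rewrite H in E.
  move: nh; rewrite gj -/L orbF mulnDl mul1n.
  case: (ltnP (k %% N) (j * L)) => h /=; first by lia.
  by move=> h2; apply/esym/negbTE; lia.
have NgtNs : forall k : 'I_(Delta * N), (k %% N < N)%N by move=> k; rewrite ltn_pmod.
have Hfull : UU Zf (map g (iota 0 c)) = setT.
  rewrite /c; case E: (0 < N - Ns * L)%N => /=.
    rewrite addn1 -addn1 iotaD map_cat UU_cat Hblk // /UU /= big_seq1 add0n.
    apply/setP => k; rewrite in_setT.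
    case: (ltnP (k %% N) (Ns * L)) => h.
      by rewrite in_setU inE h.
    rewrite in_setU; apply/orP; right; apply: memZ_in; rewrite gval; last by rewrite /c E addn1.
    by have := NgtNs k; rewrite -/L; lia.
  rewrite addn0 Hblk //; apply/setP => k; rewrite !inE.
  by have := NgtNs k; lia.
have Hu : uniq (map g (iota 0 c)).
  rewrite map_inj_in_uniq ?iota_uniq // => x y; rewrite !mem_iota !add0n => xc yc exy.
  by have := congr1 val exy; rewrite !gval // => /eqP; rewrite eqn_pmul2r // => /eqP.
set pre := map g (iota 0 c).
set ord := pre ++ [seq i <- enum 'I_N | i \notin pre].
have Hperm : perm_eq ord (enum 'I_N).
  apply: uniq_perm; [| exact: enum_uniq | ].
    rewrite cat_uniq Hu filter_uniq ?enum_uniq // andbT /=.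
    by apply/hasPn => i; rewrite mem_filter => /andP[].
  by move=> i; rewrite mem_cat mem_filter mem_enum andbT orbN.
have HU : UU Zf ord = setT by rewrite UU_cat Hfull setTU.
exists (mk Zf ord); split; first exact: valid_mk.
change (rate_rec eps Zf (mk Zf [::]) (mk Zf ord) <= prop3_bound (Delta * N) N Nr Delta eps).
rewrite rate_rr // rr_cat cat0s (rr_full eps _ Hfull).
rewrite addr0.
set M := (Delta * L)%N.
have Hrr : forall j, (j <= Ns)%N -> rr eps Zf [::] (map g (iota 0 j)) =
     \sum_(i < j) (eps ^+ M) ^+ i * hbin (eps ^+ M).
  elim=> [|j IH] jNs; first by rewrite big_ord0.
  have -> : iota 0 j.+1 = iota 0 j ++ [:: j] by rewrite -addn1 iotaD.
  rewrite big_ord_recr [X in _ = _ + X]/= map_cat rr_cat IH; last by lia.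
  congr (_ + _).
  have E1 : UU Zf (rcons (map g (iota 0 j)) (g j)) = UU Zf (map g (iota 0 j.+1)).
    by rewrite -cats1 -addn1 iotaD map_cat.
  rewrite [rr _ _ _ _]/=.
  have Hj : (j.+1 * L <= Ns * L)%N by rewrite leq_mul2r jNs orbT.
  rewrite E1 !Hblk // ?(ltnW jNs) // !card_mod; first last.
  - by move: Hj; rewrite mulSn; lia.
  - by lia.
  rewrite addr0 mulSn mulnDr addnK -exprM; congr (_ ^+ _ * _).
  by rewrite /M mulnA mulnAC.
have a1 : eps ^+ M != 1.
  rewrite lt_eqF // exprn_ilt1 ?ltW // /M; lia.
have EaN : eps ^+ M ^+ Ns = eps ^+ (Delta * (Ns * L)) by rewrite -exprM /M mulnA mulnAC.
rewrite /prop3_bound /= -/L -/Ns -/M.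
rewrite le_eqVlt; apply/orP; left; apply/eqP.
move: Hfull; rewrite /pre /c; case E: (0 < N - Ns * L)%N => Hfull.
  have -> : iota 0 (Ns + true) = iota 0 Ns ++ [:: Ns] by rewrite -[(Ns + true)%N]/(Ns + 1)%N iotaD.
  rewrite map_cat rr_cat Hrr // -mulr_suml geo //; congr (_ + _).
  rewrite [rr _ _ _ _]/=.
  have -> : UU Zf (rcons (map g (iota 0 Ns)) (g Ns)) = setT.
    by rewrite -Hfull -[(Ns + true)%N]/(Ns + 1)%N iotaD map_cat cats1.
  rewrite Hblk // card_mod // cardsT card_ord addr0 EaN; congr (_ * hbin (_ ^+ _)).
  by rewrite [(Ns * M)%N]mulnC /M mulnA mulnAC.
by rewrite addn0 Hrr // -mulr_suml geo // mulr0 addr0.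
Qed.
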